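(* Suppose that every Lipschitz quaternion $(a,b,c,d)=a+bi+cj+dk$ with integer coordinates all $>1$ can be written as $p+q$ where $p$ and $q$ are Hurwitz primes lying in $Q=\{(a,b,c,d): a,b,c,d>0\}$. Then at least one of the sequences $k^2+k+1$ $(k=0,1,2,\dots)$ and $k^2+k+3$ $(k=0,1,2,\dots)$ contains infinitely many rational primes.
   Context: Quaternions $a+bi+cj+dk$ are written $(a,b,c,d)$, with norm $N(a,b,c,d)=a^2+b^2+c^2+d^2$. Lipschitz integers are quaternions $(a,b,c,d)$ with $a,b,c,d\in\mathbb{Z}$. Hurwitz integers (in the sense of this paper) are quaternions of the form $(a+\tfrac12,b+\tfrac12,c+\tfrac12,d+\tfrac12)$ with $a,b,c,d\in\mathbb{Z}$ (all four coordinates half-odd-integers). A quaternion prime is a Lipschitz or Hurwitz integer whose norm is a rational prime; a Hurwitz prime is a quaternion prime that is a Hurwitz integer. $Q$ denotes the set of quaternions with all four coordinates strictly positive. *)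

(* Defs.v *)
From HB Require Import structures.
From mathcomp Require Import all_boot all_order all_algebra.
Set Implicit Arguments. Unset Strict Implicit. Unset Printing Implicit Defensive.
Import Order.TTheory GRing.Theory Num.Theory.
Local Open Scope ring_scope.

(* a + bi + cj + dk written (a,b,c,d) *)
Record quat := Quat { qa : rat; qb : rat; qc : rat; qd : rat }.

Definition qadd (p q : quat) : quat :=
  Quat (qa p + qa q) (qb p + qb q) (qc p + qc q) (qd p + qd q).

Definition qnorm (q : quat) : rat :=
  qa q ^+ 2 + qb q ^+ 2 + qc q ^+ 2 + qd q ^+ 2.

Definition is_integer (x : rat) : Prop := exists z : int, x = z%:~R.
Definition is_half_odd (x : rat) : Prop := exists z : int, x = z%:~R + 2%:R^-1.

Definition lipschitz (q : quat) : Prop :=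
  [/\ is_integer (qa q), is_integer (qb q), is_integer (qc q) & is_integer (qd q)].

(* Hurwitz integers (paper's sense): all coordinates half-odd integers *)
Definition hurwitz (q : quat) : Prop :=
  [/\ is_half_odd (qa q), is_half_odd (qb q), is_half_odd (qc q) & is_half_odd (qd q)].

Definition quat_prime (q : quat) : Prop :=
  (lipschitz q \/ hurwitz q) /\ exists p : nat, prime p /\ qnorm q = p%:R.

Definition hurwitz_prime (q : quat) : Prop := quat_prime q /\ hurwitz q.

Definition inQ (q : quat) : Prop := [/\ 0 < qa q, 0 < qb q, 0 < qc q & 0 < qd q].

Definition infinitely_many_prime_terms (f : nat -> nat) : Prop :=
  forall n : nat, exists k : nat, (n <= k)%N /\ prime (f k).

(* Main.v *)
Require Import Defs.
From HB Require Import structures.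
From mathcomp Require Import all_boot all_order all_algebra.
From mathcomp Require Import zify ring lra.
From Stdlib Require Import Classical.
Import Order.TTheory GRing.Theory Num.Theory.

Lemma ident (x y c : nat) : ((y*(y+1)+c) + 2*x*(x+y) = (x+y)*(x+y+1) + (x*(x-1)+c))%N.
Proof. case: x => [|x]; rewrite ?subn1 /=; nia. Qed.

Lemma bad (x y c : nat) : (x < y)%N -> (1 < x*(x-1)+c)%N -> (x*(x-1)+c %| x + y)%N ->
  ~~ prime (y*(y+1)+c).
Proof.
move=> hxy hc hd; apply/negP => /primeP [_ H].
have hg : (x*(x-1)+c %| y*(y+1)+c)%N.
  have h1 : (x*(x-1)+c %| (x+y)*(x+y+1) + (x*(x-1)+c))%N.
    by rewrite dvdn_add // dvdn_mulr.
  rewrite -ident in h1.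
  by rewrite (dvdn_addl _ (dvdn_mull (2*x) hd)) in h1.
have := H _ hg; case/orP => /eqP; first by lia.
case: x hxy {hc hd hg} => [|x] hxy; rewrite ?subn1 /=; nia.
Qed.

Fixpoint P (k : nat) : nat :=
  if k is k'.+1 then (P k' * ((k'*(k'-1)+5)*(k'*(k'-1)+7)))%N else 1%N.

Lemma P_pos k : (0 < P k)%N.
Proof. elim: k => //= k IH; rewrite !muln_gt0 IH; lia. Qed.

Lemma P_dvd k x : (x < k)%N -> (x*(x-1)+5 %| P k)%N /\ (x*(x-1)+7 %| P k)%N.
Proof.
elim: k => // k IH; rewrite ltnS leq_eqVlt => /orP [/eqP ->|/IH [h1 h2]] /=.
  by split; apply: dvdn_mull; [apply: dvdn_mulr|apply: dvdn_mull].
by split; apply: dvdn_mulr.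
Qed.

Section K.
Variable K : nat.
Hypothesis h1 : forall k, (K <= k)%N -> ~~ prime (k^2+k+1).
Hypothesis h3 : forall k, (K <= k)%N -> ~~ prime (k^2+k+3).
Hypothesis K0 : (0 < K)%N.

Lemma side z t c A B : (c = 1 \/ c = 3)%N -> (z + t = 2*K*P K)%N -> prime A -> prime B ->
  A = (z*(z+1)+c)%N -> B = (t*(t+1)+(8-c))%N -> False.
Proof.
move=> hc hzt pA pB eA eB; subst A B.
case: (leqP K z) => hz.
  case: hc pA => -> pA.
    by move: (@h1 z hz); rewrite (_ : (z^2+z+1 = z*(z+1)+1)%N) ?pA //; nia.
  by move: (@h3 z hz); rewrite (_ : (z^2+z+3 = z*(z+1)+3)%N) ?pA //; nia.
have hP := P_pos K.
have [d5 d7] := P_dvd K z hz.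
have hM : forall g, (g %| P K)%N -> (g %| z + t)%N by move=> g hg; rewrite hzt dvdn_mull.
have hKP : (2*K <= 2*K*P K)%N by rewrite leq_pmulr.
move: pB; apply/negP; apply: (bad z).
- move: hKP; rewrite -hzt => hh; lia.
- by case: hc => -> /=; apply: ltn_addl.
- by case: hc => -> /=; apply: hM.
Qed.

Lemma key x y u v w u' v' w' : (x + y = 2*K*P K)%N ->
  (u+u' = 1)%N -> (v+v' = 1)%N -> (w+w' = 1)%N ->
  prime (x*(x+1)+u*(u+1)+v*(v+1)+w*(w+1)+1) ->
  prime (y*(y+1)+u'*(u'+1)+v'*(v'+1)+w'*(w'+1)+1) -> False.
Proof.
move=> hxy hu hv hw Hp Hq.
have yx : (y + x = 2*K*P K)%N by lia.
have e01 : forall a b, (a + b = 1)%N -> (a*(a+1) = 2*a /\ b*(b+1) = 2*b)%N.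
  by move=> [|[|a]] [|[|b]] //=.
have [eu eu'] := e01 _ _ hu; have [ev ev'] := e01 _ _ hv; have [ew ew'] := e01 _ _ hw.
rewrite eu ev ew in Hp; rewrite eu' ev' ew' in Hq.
move: Hp Hq; set X := (x*(x+1))%N; set Y := (y*(y+1))%N => Hp Hq.
have [j0|[j1|[j2|j3]]] : (u+v+w = 0 \/ u+v+w = 1 \/ u+v+w = 2 \/ u+v+w = 3)%N by lia.
- by apply: (side x y 1 _ _ (or_introl erefl) hxy Hp Hq); rewrite /X /Y; lia.
- by apply: (side x y 3 _ _ (or_intror erefl) hxy Hp Hq); rewrite /X /Y; lia.
- by apply: (side y x 3 _ _ (or_intror erefl) yx Hq Hp); rewrite /X /Y; lia.
- by apply: (side y x 1 _ _ (or_introl erefl) yx Hq Hp); rewrite /X /Y; lia.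
Qed.
End K.

Local Open Scope ring_scope.

Lemma half_nat (r : rat) : is_half_odd r -> 0 < r -> exists n : nat, r = n%:R + 2^-1.
Proof.
case=> z ->; case: z => [n|n] h; first by exists n.
exfalso; move: h; rewrite NegzE mulrNz => h.
have : (1 <= (n.+1)%:R :> rat) by rewrite ler1n.
move: h; rewrite [_%:~R]/=; lra.
Qed.

Lemma coordH (n m t : nat) : (t%:R : rat) = (n%:R + 2^-1) + (m%:R + 2^-1) -> (n + m + 1 = t)%N.
Proof.
move=> h; apply/eqP; rewrite -(eqr_nat rat); apply/eqP; rewrite !natrD; move: h; lra.
Qed.

Lemma normE (x u v w : nat) :
  qnorm (Quat (x%:R + 2^-1) (u%:R + 2^-1) (v%:R + 2^-1) (w%:R + 2^-1)) =
  (x*(x+1)+u*(u+1)+v*(v+1)+w*(w+1)+1)%N%:R.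
Proof. rewrite /qnorm /= !natrD !natrM !natrD; by field. Qed.

Lemma finite_primes (f : nat -> nat) : ~ infinitely_many_prime_terms f ->
  exists n, forall k, (n <= k)%N -> ~~ prime (f k).
Proof.
move=> /not_all_ex_not [n hn]; exists n => k hk; apply/negP => pk; apply: hn.
by exists k.
Qed.

Lemma extract (p : quat) : hurwitz p -> inQ p -> exists x u v w : nat,
  p = Quat (x%:R + 2^-1) (u%:R + 2^-1) (v%:R + 2^-1) (w%:R + 2^-1).
Proof.
case: p => a b c d [/= ha hb hc hd] [/= pa pb pc pd].
have [x ->] := half_nat _ ha pa; have [u ->] := half_nat _ hb pb.
have [v ->] := half_nat _ hc pc; have [w ->] := half_nat _ hd pd.
by exists x, u, v, w.
Qed.

Theorem mainTheorem3 :
  (forall a b c d : int, 1 < a -> 1 < b -> 1 < c -> 1 < d ->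
     exists p q : quat,
       [/\ hurwitz_prime p, inQ p, hurwitz_prime q, inQ q &
           Quat a%:~R b%:~R c%:~R d%:~R = qadd p q]) ->
  infinitely_many_prime_terms (fun k => (k ^ 2 + k + 1)%N) \/
  infinitely_many_prime_terms (fun k => (k ^ 2 + k + 3)%N).
Proof.
move=> H.
case: (classic (infinitely_many_prime_terms (fun k => (k ^ 2 + k + 1)%N))) => [A|nA]; first by left.
case: (classic (infinitely_many_prime_terms (fun k => (k ^ 2 + k + 3)%N))) => [B|nB]; first by right.
exfalso.
have [n1 hn1] := finite_primes _ nA; have [n3 hn3] := finite_primes _ nB.
pose K := (n1 + n3).+1.
have h1 : forall k, (K <= k)%N -> ~~ prime (k^2+k+1).
  by move=> k hk; apply: hn1; rewrite /K in hk; lia.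
have h3 : forall k, (K <= k)%N -> ~~ prime (k^2+k+3).
  by move=> k hk; apply: hn3; rewrite /K in hk; lia.
have K0 : (0 < K)%N by [].
pose M := (2 * K * P K)%N.
have M0 : (0 < M)%N by rewrite /M muln_gt0 (P_pos K) andbT muln_gt0 K0.
have hM1 : (1 < Posz M.+1) by rewrite ltz_nat ltnS.
have h2 : (1 < Posz 2) by [].
have [p [q [[[_ [P1 [pP1 nP1]]] hp] Qp [[_ [P2 [pP2 nP2]]] hq] Qq E]]] :=
  H (Posz M.+1) (Posz 2) (Posz 2) (Posz 2) hM1 h2 h2 h2.
have [x [u [v [w ep]]]] := extract _ hp Qp.
have [y [u' [v' [w' eq]]]] := extract _ hq Qq.
subst p q.
move: E; rewrite /qadd /= => -[ea eb ec ed].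
have hxy := coordH _ _ _ ea; have huu := coordH _ _ _ eb; have hvv := coordH _ _ _ ec; have hww := coordH _ _ _ ed.
rewrite normE in nP1; rewrite normE in nP2.
move/eqP: nP1; rewrite eqr_nat => /eqP nP1.
move/eqP: nP2; rewrite eqr_nat => /eqP nP2.
rewrite -nP1 in pP1; rewrite -nP2 in pP2.
apply: (key K h1 h3 K0 x y u v w u' v' w') => //; rewrite /M; lia.
Qed.
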